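(* Let $(D,x,y)$ be an index-$2$ basic decorated resolution configuration such that neither arc of $D$ is an $\eta$-arc, and let $k=\#\{(E,z):(D,y)\prec(E,z)\prec(s(D),x)\}$ (strict inequalities). Then at least one of the following holds: (1) $D$ has a leaf or a coleaf, and $k=2$; (2) the graph $G(D)$ has exactly two vertices and two edges, each edge joining the two distinct vertices, and $k=2$; (3) $Z(D)$ consists of a single circle, both arcs of $D$ are $\Delta$-arcs, neither arc is a coleaf (such $D$ is called a butterfly configuration), and $k=4$; moreover in this case the unique circle of $D$ is labeled $x_+$ by $y$ and the unique circle of $s(D)$ is labeled $x_-$ by $x$.
   Context: A resolution configuration $D=(Z(D),A(D))$ consists of a finite set $Z(D)$ of circles immersed in $S^2$ (union has only transverse double points) and a finite totally ordered set $A(D)$ of disjoint embedded arcs meeting the circles exactly in their endpoints; its index is $|A(D)|$; it is basic if every circle meets an arc. Surgery $s_A(D)$ along $A$: in a small disk around $A$ meeting the circles in segments $\alpha$ (ends $z,w$) and $\beta$ (ends $x,y$), $z,x$ on one side of $A$, replace $\alpha\cup\beta$ by strands $z$–$y$ and $x$–$w$ crossing once; arcs become $A(D)\setminus\{A\}$; $s(D)$ is surgery along all arcs. $A$ is an $\eta$-, $\Delta$-, or $m$-arc according as surgery changes the number of circles by $0,+1,-1$. $G(D)$: vertex per circle, edge per arc (joining the circles containing its endpoints; an arc with both ends on one circle gives a loop). A leaf is a circle of degree $1$ in $G(D)$. The dual configuration $D^*$ has circles $Z(s(D))$ and, for each $A\in A(D)$, a dual arc $A^*$: a small arc parallel to $A$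 with endpoints on the two strands created by surgery along $A$. A coleaf of $D$ is an arc $A$ such that one endpoint of $A^*$ lies on a leaf of $D^*$. Labeled configurations, partial order and decorated configurations: a labeling assigns $x_+$ or $x_-$ to each circle; $(E,y)\prec(D,x)$ is generated by: $D=s_A(E)$ for a single arc $A$, $x,y$ agree on circles not meeting $\partial A$, and for a $\Delta$-arc splitting $Z_i$ into $Z_j,Z_k$: $y(Z_i)=x(Z_j)=x(Z_k)=x_-$ or ($y(Z_i)=x_+$, $\{x(Z_j),x(Z_k)\}=\{x_+,x_-\}$); for an $m$-arc merging $Z_i,Z_j$ into $Z_k$: $y(Z_i)=y(Z_j)=x(Z_k)=x_+$ or ($\{y(Z_i),y(Z_j)\}=\{x_+,x_-\}$, $x(Z_k)=x_-$); no relation for $\eta$-arcs; then take the transitive closure. A decorated resolution configuration $(D,x,y)$ has $x$ labeling $Z(s(D))$, $y$ labeling $Z(D)$, with $(D,y)\preceq(s(D),x)$. Labeled configurations $(E,z)$ between $(D,y)$ and $(s(D),x)$ have $E=s_{A'}(D)$ for $A'\subseteq A(D)$. *)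

(* Defs.v *)
From HB Require Import structures.
From mathcomp Require Import all_boot.
Set Implicit Arguments. Unset Strict Implicit. Unset Printing Implicit Defensive.

(* A port (A, e, s) is one of the four ends of the two circle segments
   inside a small disk around arc A : e = endpoint of A (false = endpoint 0,
   true = endpoint 1) through which the segment passes, s = side of A on
   which the end lies (false = the side of z and x, true = the side of w, y).
   So z = (A,0,0), w = (A,0,1), x = (A,1,0), y = (A,1,1). *)
Notation port n := ('I_n * bool * bool)%type.

(* A resolution configuration with n (totally ordered) arcs 'I_n:
   - nfree: the number of circles meeting no arc;
   - outer: the fixed-point free involution on ports recording which ports
     are joined by the circle segments outside the disks around the arcs. *)
Record config (n : nat) := Config {
  nfree : nat;
  outer : port n -> port n;
  outer_invol : forall p, outer (outer p) = p;
  outer_fpf : forall p, outer p != p }.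

Definition node n (D : config n) := (port n + 'I_(nfree D))%type.
HB.instance Definition _ n (D : config n) :=
  Finite.copy (node D) (port n + 'I_(nfree D))%type.

Section Defs.
Variables (n : nat) (D : config n).

(* Inside the disk around A: before surgery z-w and x-y, after surgery
   along A: z-y and x-w.  S is the set of arcs already surgered. *)
Definition inner (S : {set 'I_n}) (p : port n) : port n :=
  let: (A, e, s) := p in if A \in S then (A, ~~ e, ~~ s) else (A, e, ~~ s).

Definition sedge (S : {set 'I_n}) : rel (port n) :=
  fun p q => (q == outer D p) || (q == inner S p).

(* u, v lie on the same circle of s_S(D). *)
Definition nconn (S : {set 'I_n}) : rel (node D) := fun u v =>
  match u, v with
  | inl p, inl q => connect (sedge S) p q
  | inr i, inr j => i == j
  | _, _ => false
  end.

Definition circle S (u : node D) : {set node D} := [set v | nconn S u v].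
Definition circles S : {set {set node D}} := [set circle S u | u : node D].
Definition ncirc S := #|circles S|.

(* In s_S(D): for A \notin S, the point of the circles at endpoint e of A;
   for A \in S, the endpoint of the dual arc A^* lying on the new strand
   z-y (e = false) or x-w (e = true). *)
Definition endpt (A : 'I_n) (e : bool) : node D := inl (A, e, false).

Definition Delta_arc S A := ncirc (A |: S) == (ncirc S).+1.
Definition m_arc S A := (ncirc (A |: S)).+1 == ncirc S.
Definition eta_arc S A := ncirc (A |: S) == ncirc S.

(* degree of a circle C of D (resp. of s(D)) in G(D) (resp. G(D^* ));
   a loop counts twice *)
Definition deg (C : {set node D}) :=
  #|[set ae : 'I_n * bool | endpt ae.1 ae.2 \in C]|.
Definition is_leaf_in S C := (C \in circles S) && (deg C == 1).
Definition has_leaf := [exists C, is_leaf_in set0 C].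
Definition is_coleaf A := [exists e, is_leaf_in setT (circle setT (endpt A e))].
Definition has_coleaf := [exists A, is_coleaf A].

Definition basic :=
  [forall C in circles set0, exists ae : 'I_n * bool, endpt ae.1 ae.2 \in C].

(* labelings (true = x_+, false = x_-) of the circles of s_S(D), encoded as
   functions on nodes constant on circles *)
Definition valid_lab S (f : {ffun node D -> bool}) :=
  [forall u, forall v, nconn S u v ==> (f u == f v)].

Definition labeled := ({set 'I_n} * {ffun node D -> bool})%type.

Definition step : rel labeled := fun a b =>
  let S1 := a.1 in let z1 := a.2 in let S2 := b.1 in let z2 := b.2 in
  [exists A, [&& A \notin S1, S2 == A |: S1, valid_lab S1 z1, valid_lab S2 z2,
     [forall u, ~~ (nconn S1 (endpt A false) u || nconn S1 (endpt A true) u)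
                ==> (z1 u == z2 u)] &
     (if Delta_arc S1 A then
        let a := z1 (endpt A false) in
        let b := z2 (endpt A false) in let c := z2 (endpt A true) in
        (~~ a && ~~ b && ~~ c) || (a && (b != c))
      else if m_arc S1 A then
        let a := z1 (endpt A false) in let b := z1 (endpt A true) in
        let c := z2 (endpt A false) in
        (a && b && c) || ((a != b) && ~~ c)
      else false)]].

Definition lt_lab : rel labeled := fun a b => [exists c, step a c && connect step c b].

Definition interval_count (y x : {ffun node D -> bool}) :=
  #|[pred E : labeled | lt_lab (set0, y) E && lt_lab E (setT, x)]|.

End Defs.

Arguments sedge {n} D.
Arguments nconn {n} D.
Arguments circle {n} D.
Arguments circles {n} D.
Arguments ncirc {n} D.
Arguments endpt {n} D.
Arguments Delta_arc {n} D.
Arguments m_arc {n} D.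
Arguments eta_arc {n} D.
Arguments deg {n} D.
Arguments is_leaf_in {n} D.
Arguments has_leaf {n} D.
Arguments is_coleaf {n} D.
Arguments has_coleaf {n} D.
Arguments basic {n} D.
Arguments valid_lab {n} D.
Arguments labeled {n} D.
Arguments step {n} D.
Arguments lt_lab {n} D.
Arguments interval_count {n} D.

(* Main.v *)
Require Import Defs.
From HB Require Import structures.
From mathcomp Require Import all_boot.
From mathcomp Require Import zify.
From Stdlib Require Import FunctionalExtensionality.
Set Implicit Arguments. Unset Strict Implicit. Unset Printing Implicit Defensive.

Definition a0 : 'I_2 := @Ordinal 2 0 isT.
Definition a1 : 'I_2 := @Ordinal 2 1 isT.
Definition pl : seq (port 2) :=
  [:: (a0,false,false); (a0,false,true); (a0,true,false); (a0,true,true);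
      (a1,false,false); (a1,false,true); (a1,true,false); (a1,true,true)].
Definition pidx (p : port 2) : nat := let: (A,e,b) := p in (val A)*4 + (nat_of_bool e)*2 + nat_of_bool b.
Definition sel (s : bool * bool) (A : 'I_2) := if val A is 0 then s.1 else s.2.
Definition innerB (s : bool*bool) (p : port 2) : port 2 :=
  let: (A,e,b) := p in if sel s A then (A, ~~ e, ~~ b) else (A, e, ~~ b).
Definition pnth (i : nat) : port 2 := nth (a0,false,false) pl i.
Definition expandN (o : port 2 -> port 2) s (l : seq nat) :=
  undup (l ++ flatten (map (fun j => [:: pidx (o (pnth j)); pidx (innerB s (pnth j))]) l)).
Definition reachN o s p := iter 8 (expandN o s) [:: pidx p].
Definition compN o s p : nat := let r := reachN o s p in head 0 [seq j <- iota 0 8 | j \in r].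
Definition lab (bs : seq bool) (p : port 2) := nth false bs (pidx p).
Fixpoint allbits n : seq (seq bool) :=
  if n is n'.+1 then let r := allbits n' in map (cons false) r ++ map (cons true) r else [:: [::]].
Definition epB (A : 'I_2) (e : bool) : port 2 := (A, e, false).
Definition ael : seq ('I_2 * bool) := [:: (a0,false); (a0,true); (a1,false); (a1,true)].
Definition s00 := (false,false). Definition s10 := (true,false).
Definition s01 := (false,true). Definition s11 := (true,true).

Section C.
Variable (comp : bool*bool -> port 2 -> nat).
Definition ncB s := size (undup (map (comp s) pl)).
Definition validB s bs := all (fun p => lab bs p == lab bs (pnth (comp s p))) pl.
Definition coreB s1 s2 A b1 b2 :=
  all (fun p => ~~ ((comp s1 (epB A false) == comp s1 p) || (comp s1 (epB A true) == comp s1 p)) ==> (lab b1 p == lab b2 p)) pl &&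
  (if ncB s2 == (ncB s1).+1 then
     let a := lab b1 (epB A false) in let b := lab b2 (epB A false) in let c := lab b2 (epB A true) in
     (~~ a && ~~ b && ~~ c) || (a && (b != c))
   else if (ncB s2).+1 == ncB s1 then
     let a := lab b1 (epB A false) in let b := lab b1 (epB A true) in let c := lab b2 (epB A false) in
     (a && b && c) || ((a != b) && ~~ c)
   else false).
Definition degB s p := count (fun ae : 'I_2 * bool => comp s (ae.1, ae.2, false) == comp s p) ael.
Definition kB vl10 vl01 y x :=
  count (fun z => coreB s00 s10 a0 y z && coreB s10 s11 a1 z x) vl10 +
  count (fun z => coreB s00 s01 a1 y z && coreB s01 s11 a0 z x) vl01.
Definition coleafB A := has (fun e => degB s11 (epB A e) == 1) [:: false; true].
Definition conclB k (y x : seq bool) :=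
  ((has (fun p => degB s00 p == 1) pl || coleafB a0 || coleafB a1) && (k == 2))
  || ((ncB s00 == 2) && (comp s00 (epB a0 false) != comp s00 (epB a0 true))
       && (comp s00 (epB a1 false) != comp s00 (epB a1 true)) && (k == 2))
  || [&& ncB s00 == 1, ncB s10 == (ncB s00).+1, ncB s01 == (ncB s00).+1,
        ~~ coleafB a0, ~~ coleafB a1, k == 4, all (fun p => lab y p) pl,
        ncB s11 == 1 & all (fun p => ~~ lab x p) pl].
Definition mainB :=
  (ncB s10 != ncB s00) && (ncB s01 != ncB s00) ==>
  let vl00 := filter (validB s00) (allbits 8) in
  let vl10 := filter (validB s10) (allbits 8) in
  let vl01 := filter (validB s01) (allbits 8) in
  let vl11 := filter (validB s11) (allbits 8) in
  all (fun y => all (fun x => let k := kB vl10 vl01 y x in (0 < k) ==> conclB k y x) vl11) vl00.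
End C.

Definition closedB o s := all (fun p => (compN o s (o p) == compN o s p) && (compN o s (innerB s p) == compN o s p)) pl.
Definition tblcomp o := let t00 := map (compN o s00) pl in let t10 := map (compN o s10) pl in
  let t01 := map (compN o s01) pl in let t11 := map (compN o s11) pl in
  fun s p => nth 0 (if s.1 then if s.2 then t11 else t10 else if s.2 then t01 else t00) (pidx p).
Definition checkB o := [&& closedB o s00, closedB o s10, closedB o s01, closedB o s11 & mainB (tblcomp o)].

Definition mk (q : seq (port 2)) (p : port 2) := nth p q (pidx p).
Definition consist (q : seq (port 2)) (qi : port 2) :=
  let i := size q in let pi := nth qi pl i in
  (qi != pi) && all (fun j => (nth qi q j == pi) == (qi == nth qi pl j)) (iota 0 i).
Fixpoint enumB (n : nat) (q : seq (port 2)) : bool :=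
  if n is n'.+1 then all (fun qi => if consist q qi then enumB n' (rcons q qi) else true) pl
  else checkB (mk q).


Lemma ord2 (A : 'I_2) : A = a0 \/ A = a1.
Proof. case: A => [[|[|//]] H]; [left|right]; exact: val_inj. Qed.

Lemma pnth_pidx p : pnth (pidx p) = p.
Proof. case: p => [[A e] b]; case: (ord2 A) => ->; by case: e; case: b. Qed.

Lemma pidx_lt p : pidx p < 8.
Proof. case: p => [[A e] b]; case: (ord2 A) => ->; by case: e; case: b. Qed.

Lemma size_pl : size pl = 8. Proof. by []. Qed.

Lemma mem_pl p : p \in pl.
Proof. by rewrite -[p]pnth_pidx /pnth mem_nth // size_pl pidx_lt. Qed.

Lemma uniq_pl : uniq pl.
Proof. by []. Qed.

Lemma pidx_inj : injective pidx.
Proof. by move=> p q H; rewrite -(pnth_pidx p) H pnth_pidx. Qed.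

Lemma innerBK s : involutive (innerB s).
Proof. case=> [[A e] b] /=; case H: (sel s A) => /=; by rewrite H !negbK. Qed.

Definition eB (o : port 2 -> port 2) s : rel (port 2) := fun p q => (q == o p) || (q == innerB s p).

Lemma reach_sound o s p j : j \in reachN o s p -> connect (eB o s) p (pnth j).
Proof.
rewrite /reachN; elim: 8 j => [|n IH] j /=.
  by rewrite inE => /eqP ->; rewrite pnth_pidx connect0.
rewrite /expandN mem_undup mem_cat => /orP[/IH //|/flattenP[l /mapP[k Hk ->]]].
rewrite !inE => /orP[]/eqP->; rewrite pnth_pidx; apply: connect_trans (IH _ Hk) _;
  apply: connect1; by rewrite /eB eqxx ?orbT.
Qed.

Lemma reach_self o s p : pidx p \in reachN o s p.
Proof.
rewrite /reachN; elim: 8 => [|n IH] /=; first by rewrite inE.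
by rewrite /expandN mem_undup mem_cat IH.
Qed.

Lemma compN_in o s p : compN o s p \in reachN o s p.
Proof.
rewrite /compN; set r := reachN o s p.
have : pidx p \in [seq j <- iota 0 8 | j \in r] by rewrite mem_filter mem_iota pidx_lt reach_self.
case: [seq j <- iota 0 8 | j \in r] (filter_all (fun j => j \in r) (iota 0 8)) => [//|j l] /= /andP[] //.
Qed.

Lemma compN_conn o s p : connect (eB o s) p (pnth (compN o s p)).
Proof. exact: reach_sound (compN_in o s p). Qed.

Lemma compN_inv o s x y : closedB o s -> connect (eB o s) x y -> compN o s x = compN o s y.
Proof.
move=> /allP Hc /connectP[q]; elim: q x => [|z q IH] x /=; first by move=> _ ->.
move=> /andP[Hxz Hp] Hy; rewrite -(IH z Hp Hy).
have /andP[/eqP H1 /eqP H2] := Hc x (mem_pl x).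
by case/orP: Hxz => /eqP ->.
Qed.

Lemma eB_sym o s : involutive o -> symmetric (eB o s).
Proof.
move=> Ho x y; rewrite /eB.
have E1 : (y == o x) = (x == o y).
  by apply/eqP/eqP => [->|->]; rewrite Ho.
have E2 : (y == innerB s x) = (x == innerB s y).
  by apply/eqP/eqP => [->|->]; rewrite innerBK.
by rewrite E1 E2.
Qed.

Lemma conn_compN o s x y : involutive o -> closedB o s ->
  connect (eB o s) x y = (compN o s x == compN o s y).
Proof.
move=> Ho Hc; apply/idP/eqP; first exact: compN_inv.
move=> E; have Hs := sym_connect_sym (eB_sym s Ho).
apply: connect_trans (compN_conn o s x) _; rewrite E Hs; exact: compN_conn.
Qed.

Lemma compN_rep o s x : closedB o s -> compN o s (pnth (compN o s x)) = compN o s x.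
Proof. by move=> Hc; rewrite -(compN_inv Hc (compN_conn o s x)). Qed.

Lemma card_seq (T : finType) (s : seq T) : #|s| = size (undup s).
Proof.
move/card_uniqP: (undup_uniq s) => <-; apply: eq_card => x; by rewrite mem_undup.
Qed.

Lemma undup_map_size (T U V : eqType) (f : T -> U) (g : T -> V) (s : seq T) :
  {in s &, forall a b, (f a == f b) = (g a == g b)} ->
  size (undup (map f s)) = size (undup (map g s)).
Proof.
elim: s => [//|a s IH] H /=.
have H' : {in s &, forall a b, (f a == f b) = (g a == g b)}.
  by move=> u v Hu Hv; apply: H; rewrite inE ?Hu ?Hv orbT.
have -> : (f a \in map f s) = (g a \in map g s).
  apply/mapP/mapP => [[b Hb E]|[b Hb E]]; exists b => //; apply/eqP.
    by rewrite eq_sym -H ?inE ?Hb ?orbT ?eqxx // E.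
  by rewrite eq_sym H ?inE ?Hb ?orbT ?eqxx // E.
by case: ifP => _ /=; rewrite IH.
Qed.

Lemma card_count (T : finType) (s : seq T) (P : {pred T}) :
  uniq s -> (forall x, x \in s) -> #|P| = count (fun x => x \in P) s.
Proof.
move=> Us Hs; rewrite -size_filter; move/card_uniqP: (filter_uniq (fun x => x \in P) Us) => <-.
by apply: eq_card => x; rewrite mem_filter Hs andbT.
Qed.

Definition toB (S : {set 'I_2}) := (a0 \in S, a1 \in S).

Lemma sel_toB S A : sel (toB S) A = (A \in S).
Proof. by case: (ord2 A) => ->. Qed.

Lemma inner_toB S p : inner S p = innerB (toB S) p.
Proof. by case: p => [[A e] b] /=; rewrite sel_toB. Qed.

Section DLevel.
Variables (D : config 2).
Hypothesis h0 : nfree D = 0.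
Hypothesis hcl : forall s, closedB (outer D) s.
Local Notation c := (compN (outer D)).

Lemma node_inl (u : node D) : exists p, u = inl p.
Proof. case: u => [p|i]; first by exists p. by have := ltn_ord i; rewrite {2}h0. Qed.

Lemma nconnE S p q : nconn D S (inl p) (inl q) = (c (toB S) p == c (toB S) q).
Proof.
rewrite /nconn -conn_compN //; last exact: outer_invol.
by apply: eq_connect => u v; rewrite /sedge /eB inner_toB.
Qed.

Lemma nconn_inl S p u : nconn D S (inl p) u -> exists q, u = inl q.
Proof. by case: u => [q|i] //; exists q. Qed.

Lemma circle_eq S p q : (circle D S (inl p) == circle D S (inl q)) = (c (toB S) p == c (toB S) q).
Proof.
apply/eqP/eqP => [E|E].
  have : inl q \in circle D S (inl p) by rewrite E /circle inE nconnE.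
  by rewrite /circle inE nconnE => /eqP.
apply/setP => u; rewrite /circle !inE; case: (node_inl u) => r ->; by rewrite !nconnE E.
Qed.

Lemma ncircE S : ncirc D S = ncB c (toB S).
Proof.
rewrite /ncirc /circles.
have -> : #|[set circle D S u | u : node D]| = #|map (fun p => circle D S (inl p)) pl|.
  apply: eq_card => X; apply/imsetP/mapP => [[u _ ->]|[p _ ->]].
    by case: (node_inl u) => p ->; exists p => //; exact: mem_pl.
  by exists (inl p).
rewrite card_seq /ncB; apply: undup_map_size => a b _ _; exact: circle_eq.
Qed.

Definition bits (f : {ffun node D -> bool}) : seq bool := map (fun p => f (inl p)) pl.

Lemma lab_bits f p : lab (bits f) p = f (inl p).
Proof. by rewrite /lab /bits (nth_map (a0,false,false)) ?size_pl ?pidx_lt // -/(pnth _) pnth_pidx. Qed.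

Lemma uniq_ael : uniq ael. Proof. by []. Qed.
Lemma mem_ael ae : ae \in ael.
Proof. case: ae => A e; case: (ord2 A) => ->; by case: e. Qed.

Lemma degE S p : deg D (circle D S (inl p)) = degB c (toB S) p.
Proof.
rewrite /deg (card_count _ uniq_ael mem_ael) /degB; apply: eq_count => ae.
by rewrite inE /circle inE /endpt nconnE eq_sym.
Qed.

Lemma toB0 : toB set0 = s00. Proof. by rewrite /toB !inE. Qed.
Lemma toBT : toB setT = s11. Proof. by rewrite /toB !inE. Qed.
Lemma toB1a : toB [set a0] = s10. Proof. by rewrite /toB !inE. Qed.
Lemma toB1b : toB [set a1] = s01. Proof. by rewrite /toB !inE. Qed.

Lemma has_leafE : has_leaf D = has (fun p => degB c s00 p == 1) pl.
Proof.
apply/existsP/hasP => [[C /andP[/imsetP[u _ ->] Hd]]|[p _ Hp]].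
  case: (node_inl u) Hd => p -> Hd; exists p; first exact: mem_pl.
  by rewrite -toB0 -degE.
exists (circle D set0 (inl p)); rewrite /is_leaf_in degE toB0 Hp andbT.
exact: imset_f.
Qed.

Lemma coleafE A : is_coleaf D A = coleafB c A.
Proof.
rewrite /is_coleaf /coleafB; apply/existsP/hasP => [[e /andP[_ Hd]]|[e _ Hd]].
  exists e; [by case: (e) | by rewrite -toBT -degE].
exists e; rewrite /is_leaf_in /endpt degE toBT Hd andbT; exact: imset_f.
Qed.

Lemma has_coleafE : has_coleaf D = coleafB c a0 || coleafB c a1.
Proof.
rewrite /has_coleaf; apply/existsP/orP => [[A]|[H|H]]; last 2 first.
- by exists a0; rewrite coleafE.
- by exists a1; rewrite coleafE.
by rewrite coleafE; case: (ord2 A) => ->; [left|right].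
Qed.

Lemma validE S f : valid_lab D S f = validB c (toB S) (bits f).
Proof.
apply/forallP/allP => [H p _|H u].
  rewrite !lab_bits; have := forallP (H (inl p)) (inl (pnth (c (toB S) p))).
  by rewrite nconnE compN_rep // eqxx.
apply/forallP => v; case: (node_inl u) => p ->; case: (node_inl v) => q ->.
rewrite nconnE; apply/implyP => /eqP E.
have /eqP := H p (mem_pl p); have /eqP := H q (mem_pl q).
by rewrite !lab_bits E => -> ->.
Qed.

Lemma stepE S1 z1 S2 z2 : step D (S1,z1) (S2,z2) =
  [exists A, [&& A \notin S1, S2 == A |: S1, validB c (toB S1) (bits z1),
     validB c (toB S2) (bits z2) & coreB c (toB S1) (toB S2) A (bits z1) (bits z2)]].
Proof.
rewrite /step /=; apply: eq_existsb => A.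
case: eqP => [->|_]; last by rewrite /= andbF.
rewrite !validE /coreB /Delta_arc /m_arc !ncircE !lab_bits.
have -> : [forall u, ~~ (nconn D S1 (endpt D A false) u || nconn D S1 (endpt D A true) u)
              ==> (z1 u == z2 u)] =
          all (fun p => ~~ ((c (toB S1) (epB A false) == c (toB S1) p) ||
                (c (toB S1) (epB A true) == c (toB S1) p)) ==> (lab (bits z1) p == lab (bits z2) p)) pl.
  apply/forallP/allP => [H p _|H u].
    by have := H (inl p); rewrite /endpt !nconnE !lab_bits.
  case: (node_inl u) => p ->; have := H p (mem_pl p); by rewrite /endpt !nconnE !lab_bits.
by [].
Qed.
End DLevel.

Section Order.
Variable D : config 2.

Lemma step_card a b : step D a b -> #|b.1| = #|a.1|.+1.
Proof.
case: a b => [S1 z1] [S2 z2] /existsP[A /and3P[HA /eqP -> _]] /=.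
by rewrite cardsU1 HA.
Qed.

Lemma conn_split a b : connect (step D) a b -> a = b \/ exists c, step D a c /\ connect (step D) c b.
Proof.
case/connectP => [[|c p]] /=; first by move=> _ ->; left.
move=> /andP[Hac Hp] Hb; right; exists c; split => //; apply/connectP; by exists p.
Qed.

Lemma conn_card a b : connect (step D) a b -> a = b \/ #|a.1| < #|b.1|.
Proof.
case/connectP => p; elim: p a => [|c p IH] a /=; first by move=> _ ->; left.
move=> /andP[Hac Hp] Hb; right; have := step_card Hac.
case: (IH c Hp Hb) => [<- -> //|H E]; rewrite E in H; exact: ltnW.
Qed.

Lemma cardT2 : #|[set: 'I_2]| = 2. Proof. by rewrite cardsT card_ord. Qed.

Lemma le_card2 (S : {set 'I_2}) : #|S| <= 2.
Proof. by apply: leq_trans (max_card _) _; rewrite card_ord. Qed.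

Lemma lt_stepE y x E : lt_lab D (set0, y) E && lt_lab D E (setT, x) =
  step D (set0, y) E && step D E (setT, x).
Proof.
apply/idP/idP; last first.
  case/andP => s1 s2; apply/andP; split; apply/existsP; [exists E | exists (setT, x)]; by rewrite ?s1 ?s2 connect0.
case/andP => /existsP[c1 /andP[s1 k1]] /existsP[c2 /andP[s2 k2]].
have h1 := step_card s1; have h2 := step_card s2; have h3 := le_card2 c2.1.
rewrite /= cards0 in h1.
case: (conn_card k1) => [E1|]; last by move=> H; rewrite h1 in H; rewrite h2 ltnS in h3; rewrite ltnNge h3 in H.
subst c1.
case: (conn_card k2) => [E2|]; first by subst c2; rewrite s1 s2.
by move=> H; rewrite h2 cardT2 h1 in H.
Qed.

Lemma interval_stepE y x : interval_count D y x =
  #|[pred E | step D (set0, y) E && step D E (setT, x)]|.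
Proof. by apply: eq_card => E; rewrite !inE lt_stepE. Qed.

Lemma interval_pos y x : connect (step D) (set0, y) (setT, x) -> 0 < interval_count D y x.
Proof.
move=> H; case: (conn_split H) => [[E _]|[c [s1 k1]]].
  by move: cardT2; rewrite -E cards0.
case: (conn_split k1) => [E|[d [s2 k2]]].
  by have := step_card s1; rewrite E /= cards0 cardT2.
apply/card_gt0P; exists c; rewrite !inE; apply/andP; split; apply/existsP.
  by exists c; rewrite s1 connect0.
by exists d; rewrite s2 k2.
Qed.
End Order.

Lemma card_fiber (T1 T2 : finType) (P : pred (T1 * T2)) (t : T1) :
  #|[pred E | P E && (E.1 == t)]| = #|[pred z | P (t, z)]|.
Proof.
have inj : injective (@pair T1 T2 t) by move=> u v [->].
rewrite -(card_imset _ inj); apply: eq_card => E; case: E => a b; rewrite !inE /=.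
apply/andP/imsetP => [[H /eqP E]|[z Hz [-> ->]]]; last by rewrite eqxx.
by subst a; exists b.
Qed.

Lemma consI (b : bool) : injective (cons b). Proof. by move=> u v []. Qed.

Lemma mem_allbits n bs : (bs \in allbits n) = (size bs == n).
Proof.
elim: n bs => [|n IH] bs; case: bs => [|b bs] //=.
  by rewrite mem_cat; apply/negP => /orP[] /mapP[].
rewrite mem_cat; case: b.
  have -> : (true :: bs \in map (cons false) (allbits n)) = false.
    by apply/mapP => -[].
  by rewrite (mem_map (@consI true)) IH.
have -> : (false :: bs \in map (cons true) (allbits n)) = false.
  by apply/mapP => -[].
by rewrite (mem_map (@consI false)) IH orbF.
Qed.

Lemma uniq_allbits n : uniq (allbits n).
Proof.
elim: n => [//|n IH] /=; rewrite cat_uniq !map_inj_uniq ?IH //; try by move=> u v [].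
rewrite andbT; apply/hasPn => u /mapP[v _ ->]; by apply/mapP => -[].
Qed.

Lemma pidx_pnth i : i < 8 -> pidx (pnth i) = i.
Proof. by do 8?[case: i => [//|i]]. Qed.

Lemma map_lab bs : size bs = 8 -> map (lab bs) pl = bs.
Proof.
move=> Hs; apply: (@eq_from_nth _ false); first by rewrite size_map size_pl Hs.
move=> i; rewrite size_map size_pl => Hi.
by rewrite (nth_map (a0,false,false)) ?size_pl // /lab -/(pnth i) pidx_pnth.
Qed.

Section DLevel2.
Variables (D : config 2).
Hypothesis h0 : nfree D = 0.
Hypothesis hcl : forall s, closedB (outer D) s.
Local Notation c := (compN (outer D)).

Definition ofbits (bs : seq bool) : {ffun node D -> bool} :=
  [ffun u => match u with inl p => lab bs p | inr _ => false end].

Lemma bits_ofbits bs : size bs = 8 -> bits (ofbits bs) = bs.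
Proof. move=> Hs; rewrite /bits -{2}(map_lab Hs); apply: eq_map => p; by rewrite ffunE. Qed.

Lemma ofbits_bits z : ofbits (bits z) = z.
Proof. apply/ffunP => u; rewrite ffunE; case: (node_inl h0 u) => p ->; by rewrite lab_bits. Qed.

Lemma size_bits (z : {ffun node D -> bool}) : size (bits z) = 8.
Proof. by rewrite size_map. Qed.

Lemma card_bits (Q : pred (seq bool)) :
  #|[pred z : {ffun node D -> bool} | Q (bits z)]| = count Q (allbits 8).
Proof.
rewrite (card_count (s := map ofbits (allbits 8))).
- rewrite count_map; apply: eq_in_count => bs; rewrite mem_allbits => /eqP Hs.
  rewrite /preim /= inE; congr Q; exact: bits_ofbits.
- rewrite map_inj_in_uniq ?uniq_allbits // => u v; rewrite !mem_allbits => /eqP Hu /eqP Hv E.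
  by rewrite -(bits_ofbits Hu) E bits_ofbits.
move=> z; rewrite -(ofbits_bits z); apply: map_f; by rewrite mem_allbits size_bits.
Qed.
End DLevel2.

Lemma other2 (A B A' : 'I_2) : B != A -> (A' != A) = (A' == B).
Proof. by case: (ord2 A) => ->; case: (ord2 B) => ->; case: (ord2 A') => ->. Qed.

Lemma setT2 (A B : 'I_2) : B != A -> [set: 'I_2] = B |: [set A].
Proof.
move=> HB; apply/setP => C; rewrite !inE.
by case: (ord2 A) HB => ->; case: (ord2 B) => ->; case: (ord2 C) => ->.
Qed.



Lemma count_filter' (T : Type) (a p : pred T) s :
  count a (filter p s) = count (fun x => p x && a x) s.
Proof. by rewrite count_filter; apply: eq_count => u; rewrite /= andbC. Qed.

Section DLevel3.
Variables (D : config 2).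
Hypothesis h0 : nfree D = 0.
Hypothesis hcl : forall s, closedB (outer D) s.
Local Notation c := (compN (outer D)).
Variables (y x : {ffun node D -> bool}).
Hypothesis Vy : validB c s00 (bits y).
Hypothesis Vx : validB c s11 (bits x).

Lemma step1E A z : step D (set0, y) ([set A], z) =
  validB c (toB [set A]) (bits z) && coreB c s00 (toB [set A]) A (bits y) (bits z).
Proof.
rewrite stepE // toB0 Vy; apply/existsP/idP => [[A' /and5P[_ /eqP E _ Hv Hc]]|H].
  by move: E; rewrite setU0 => /set1_inj E; subst A'; rewrite Hv Hc.
by exists A; rewrite inE setU0 eqxx.
Qed.

Lemma step2E A B z : B != A -> step D ([set A], z) (setT, x) =
  validB c (toB [set A]) (bits z) && coreB c (toB [set A]) s11 B (bits z) (bits x).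
Proof.
move=> HB; rewrite stepE // toBT Vx; apply/existsP/idP => [[A' /and5P[HA' /eqP E Hv _ Hc]]|H].
  rewrite inE (other2 _ HB) in HA'; by rewrite -(eqP HA') Hv Hc.
exists B; rewrite inE HB -setT2 // eqxx /=; by case/andP: H => -> ->.
Qed.

Lemma fiberE A B : B != A ->
  #|[pred z | step D (set0, y) ([set A], z) && step D ([set A], z) (setT, x)]| =
  count (fun bs => coreB c s00 (toB [set A]) A (bits y) bs && coreB c (toB [set A]) s11 B bs (bits x))
        (filter (validB c (toB [set A])) (allbits 8)).
Proof.
move=> HB. rewrite count_filter'.
rewrite -(card_bits h0).
apply: eq_card => z. rewrite !inE step1E (step2E _ HB).
by rewrite andbACA andbb.
Qed.

Lemma fiberE' A B : B != A ->
  #|[pred E : labeled D | (step D (set0, y) E && step D E (setT, x)) && (E.1 == [set A])]| =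
  count (fun bs => coreB c s00 (toB [set A]) A (bits y) bs && coreB c (toB [set A]) s11 B bs (bits x))
        (filter (validB c (toB [set A])) (allbits 8)).
Proof.
move=> HB; rewrite (card_fiber (fun E : labeled D => step D (set0, y) E && step D E (setT, x))).
exact: fiberE.
Qed.

Lemma neq01 : ([set a0] == [set a1]) = false.
Proof. by apply/negbTE/negP => /eqP/set1_inj. Qed.
Lemma neq10 : ([set a1] == [set a0]) = false.
Proof. by apply/negbTE/negP => /eqP/set1_inj. Qed.

Lemma intervalE : interval_count D y x =
  kB c (filter (validB c s10) (allbits 8)) (filter (validB c s01) (allbits 8)) (bits y) (bits x).
Proof.
rewrite interval_stepE -(cardID [pred E : labeled D | E.1 == [set a0]]) /kB -toB1a -toB1b.
congr (_ + _).
  rewrite -(@fiberE' a0 a1) //; apply: eq_card => E; by rewrite !inE.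
rewrite -(@fiberE' a1 a0) //.
apply: eq_card => -[S z]; rewrite !inE /=.
case H: (step D (set0, y) (S, z)); last by rewrite /= andbF.
have HS : S = [set a0] \/ S = [set a1].
  move: H; rewrite stepE // => /existsP[A /and3P[_ /eqP E _]]; rewrite setU0 in E.
  by case: (ord2 A) E => -> ->; [left|right].
by case: HS => ->; rewrite ?eqxx ?neq01 ?neq10 /= ?andbT ?andbF.
Qed.
End DLevel3.


Lemma inv_eq (o : port 2 -> port 2) a b : involutive o -> (o a == b) = (o b == a).
Proof. by move=> Ho; apply/eqP/eqP => <-; rewrite Ho. Qed.

Lemma enum_gen (o : port 2 -> port 2) n k : involutive o -> (forall p, o p != p) ->
  n + k = 8 -> enumB n (take k (map o pl)) -> checkB (mk (map o pl)).
Proof.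
move=> Ho Hf; elim: n k => [|n IH] k.
  by rewrite add0n => -> ; rewrite take_oversize // size_map size_pl; exact: id.
move=> Hk Hall; have := @allP _ _ pl Hall (o (pnth k)) (mem_pl _).
have Hk8 : k < 8 by rewrite -Hk addSn ltnS leq_addl.
have Hc : consist (take k (map o pl)) (o (pnth k)).
  rewrite /consist size_take size_map size_pl Hk8 (set_nth_default (a0,false,false)) ?size_pl //.
  rewrite Hf andTb; apply/allP => j; rewrite mem_iota add0n => /andP[_ Hj].
  rewrite nth_take //; rewrite (nth_map (a0,false,false)) ?size_pl ?(ltn_trans Hj) //.
  rewrite (set_nth_default (a0,false,false)) ?size_pl ?(ltn_trans Hj Hk8) // -/(pnth j) -/(pnth k).
  by rewrite (inv_eq _ _ Ho) eqxx.
rewrite Hc -(nth_map (a0,false,false) (a0,false,false) o) ?size_pl //.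
rewrite -take_nth ?size_map ?size_pl //; apply: IH; by rewrite addnS.
Qed.

Lemma mk_map (o : port 2 -> port 2) : mk (map o pl) = o.
Proof.
apply: functional_extensionality => p.
rewrite /mk (nth_map p p o) ?size_pl ?pidx_lt // (set_nth_default (a0,false,false)) ?size_pl ?pidx_lt //.
by rewrite -/(pnth (pidx p)) pnth_pidx.
Qed.

Lemma enum_ok : enumB 8 [::].
Proof. vm_compute. reflexivity. Qed.

Lemma checkB_outer (D : config 2) : checkB (outer D).
Proof.
rewrite -(mk_map (outer D)); apply: (@enum_gen _ 8 0).
- exact: outer_invol.
- exact: outer_fpf.
- reflexivity.
- rewrite take0; exact: enum_ok.
Qed.


Lemma basic_nfree (D : config 2) : basic D -> nfree D = 0.
Proof.
move=> /forallP Hb; case E: (nfree D) => [//|n].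
have Hi : 0 < nfree D by rewrite E.
have := Hb (circle D set0 (inr (Ordinal Hi))); rewrite imset_f // => /existsP[[A e] /=].
by rewrite /circle inE.
Qed.

Lemma tblcompE o : tblcomp o = compN o.
Proof.
apply: functional_extensionality => s; apply: functional_extensionality => p.
rewrite /tblcomp; case: s => [[] []]; cbv beta iota zeta delta [fst snd];
  by rewrite (nth_map (a0,false,false)) ?size_pl ?pidx_lt // -/(pnth (pidx p)) pnth_pidx.
Qed.

Lemma mainB_use (comp : bool * bool -> port 2 -> nat) (y x : seq bool) :
  mainB comp -> ncB comp s10 != ncB comp s00 -> ncB comp s01 != ncB comp s00 ->
  validB comp s00 y -> validB comp s11 x -> size y = 8 -> size x = 8 ->
  let k := kB comp (filter (validB comp s10) (allbits 8)) (filter (validB comp s01) (allbits 8)) y x in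
  0 < k -> conclB comp k y x.
Proof.
move=> Hm H0 H1 Vy Vx Sy Sx k Hk.
have Hpre : (ncB comp s10 != ncB comp s00) && (ncB comp s01 != ncB comp s00) by apply/andP.
move/implyP: Hm => /(_ Hpre) Hm.
have Hy : y \in filter (validB comp s00) (allbits 8) by rewrite mem_filter Vy mem_allbits Sy.
have Hx : x \in filter (validB comp s11) (allbits 8) by rewrite mem_filter Vx mem_allbits Sx.
have := allP Hm y Hy => /allP /(_ x Hx) /implyP; exact.
Qed.

Theorem mainTheorem6 (D : config 2) (x y : {ffun node D -> bool}) :
  basic D ->
  (forall A : 'I_2, ~~ eta_arc D set0 A) ->
  valid_lab D set0 y -> valid_lab D setT x ->
  connect (step D) (set0, y) (setT, x) ->
  ((has_leaf D || has_coleaf D) /\ interval_count D y x = 2)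
  \/ ((ncirc D set0 = 2 /\
       (forall A : 'I_2, circle D set0 (endpt D A false) != circle D set0 (endpt D A true)))
      /\ interval_count D y x = 2)
  \/ ((ncirc D set0 = 1 /\ (forall A : 'I_2, Delta_arc D set0 A)
       /\ (forall A : 'I_2, ~~ is_coleaf D A))
      /\ interval_count D y x = 4
      /\ (forall u, y u = true)
      /\ ncirc D setT = 1 /\ (forall u, x u = false)).
Proof.
move=> Hb Heta Vy Vx Hconn.
have h0 := basic_nfree Hb.
have /and5P[H00 H10 H01 H11 Hm] := checkB_outer D.
have hcl : forall s, closedB (outer D) s by case=> [[] []].
rewrite tblcompE in Hm.
set c := compN (outer D) in Hm.
have Vy' : validB c s00 (bits y) by rewrite -toB0 -validE.
have Vx' : validB c s11 (bits x) by rewrite -toBT -validE.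
have Hk := intervalE h0 hcl Vy' Vx'.
have Hpos := interval_pos Hconn.
have He0 : ncB c s10 != ncB c s00.
  by have := Heta a0; rewrite /eta_arc !(ncircE h0 hcl) setU0 toB1a toB0.
have He1 : ncB c s01 != ncB c s00.
  by have := Heta a1; rewrite /eta_arc !(ncircE h0 hcl) setU0 toB1b toB0.
have := mainB_use Hm He0 He1 Vy' Vx' (size_bits y) (size_bits x).
cbv zeta; rewrite -Hk => /(_ Hpos).
rewrite /conclB.
case/orP => [/orP[/andP[Hl /eqP Hk2]|/andP[/andP[/andP[Hn2 Hc0] Hc1] /eqP Hk2]]|H3].
- left; split => //.
  by rewrite (has_leafE h0 hcl) (has_coleafE hcl) orbA.
- right; left; split => //; split; first by move: Hn2; rewrite (ncircE h0 hcl) toB0 => /eqP.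
  move=> A; rewrite /endpt (circle_eq h0 hcl) toB0.
  by case: (ord2 A) => ->.
- right; right.
  case/and5P: H3 => Hn1 Hd0 Hd1 Hc0 /and5P[Hc1 /eqP Hk4 Hy Hn11 Hx].
  split; first split; [|split|].
  + by move: Hn1; rewrite (ncircE h0 hcl) toB0 => /eqP.
  + move=> A; rewrite /Delta_arc !(ncircE h0 hcl) setU0 toB0.
    by case: (ord2 A) => ->; [rewrite toB1a; exact: Hd0 | rewrite toB1b; exact: Hd1].
  + move=> A; rewrite (coleafE hcl); by case: (ord2 A) => ->; [exact: Hc0 | exact: Hc1].
  split => //; split.
    move=> u; case: (node_inl h0 u) => p ->; rewrite -lab_bits; exact: (allP Hy p (mem_pl p)).
  split; first by move: Hn11; rewrite (ncircE h0 hcl) toBT => /eqP.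
  move=> u; case: (node_inl h0 u) => p ->; rewrite -lab_bits; apply/negbTE; exact: (allP Hx p (mem_pl p)).
Qed.
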